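(* Let $p$ be a prime and let $G$ be a group of order $p^7$ and nilpotency class $4$ such that $\gamma_2(G)$ is elementary abelian of order $p^5$ (so that $\operatorname{Z}(G) = \gamma_4(G)$ has order $p^2$). Suppose $G = \langle \alpha_1, \alpha_2\rangle$, and put $\beta = [\alpha_1,\alpha_2]$, $\beta_i = [\beta,\alpha_i]$ and $\eta_{ij} = [\beta_i,\alpha_j]$ for $i,j \in \{1,2\}$. Assume that $\gamma_4(G) = \langle \eta_{11}, \eta_{12}\rangle$ and that $\eta_{22} = \eta_{11}^m \eta_{12}^n$ for some $m, n \in \mathbb{F}_p$, not both zero. Then $G$ admits a subgroup $H \leq \operatorname{Z}(G)$ of order $p$ with $|\operatorname{Z}(G/H)| = p^2$ if and only if the equation $m\lambda^2 + n\lambda\mu - \mu^2 = 0$ has a solution $(\lambda,\mu) = (\lambda_0,\mu_0) \in \mathbb{F}_p^2$ with $\lambda_0 \neq 0$.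
   Context: For a group $G$, $[x,y] = x^{-1}y^{-1}xy$; $\gamma_i(G)$ is the $i$-th term of the lower central series and $\operatorname{Z}(G)$ the center. $\mathbb{F}_p$ is the field with $p$ elements; exponents in $\mathbb{F}_p$ are interpreted via integer representatives (well defined since $\gamma_4(G)$ has exponent $p$). *)

(* Defs.v *)
From mathcomp Require Import all_boot all_order all_algebra all_fingroup all_solvable.
Set Implicit Arguments.
Unset Strict Implicit.
Unset Printing Implicit Defensive.

(* Main.v *)
Require Import Defs.
From mathcomp Require Import all_boot all_order all_algebra all_fingroup all_solvable.
From mathcomp Require Import ring.
Import GRing.Theory.
Local Open Scope group_scope.
Set Implicit Arguments. Unset Strict Implicit. Unset Printing Implicit Defensive.

Lemma comm_cosetP (gT : finGroupType) (N : {group gT}) x y :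
  x \in 'N(N) -> y \in 'N(N) ->
  ([~ x, y] \in N) = ([~ coset N x, coset N y] == 1).
Proof.
move=> nx ny; rewrite -morphR //.
apply/idP/eqP => [/coset_id // | ]; apply: coset_idr; exact: groupR.
Qed.

Lemma comm_gen (gT : finGroupType) (N : {group gT}) (A : {set gT}) x :
  x \in 'N(N) -> A \subset 'N(N) -> {in A, forall a, [~ x, a] \in N} ->
  {in <<A>>, forall g, [~ x, g] \in N}.
Proof.
move=> nx nA hA.
have sub: <<A>> \subset coset N @*^-1 'C[coset N x].
  rewrite gen_subG; apply/subsetP => a Aa.
  have na := subsetP nA a Aa.
  apply: mem_morphpre => //; apply/cent1P; apply/commgP.
  by rewrite -comm_cosetP // -groupV invg_comm hA.
move=> g /(subsetP sub); rewrite morphpreE => /morphpreP[ng].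
move/cent1P => c; rewrite comm_cosetP //; apply/commgP; exact: commute_sym.
Qed.

Lemma preZ (gT : finGroupType) (G N : {group gT}) a1 a2 x :
  G :=: <<[set a1; a2]>> -> N <| G ->
  (x \in G :&: coset N @*^-1 'Z(G / N)) =
  [&& x \in G, [~ x, a1] \in N & [~ x, a2] \in N].
Proof.
move=> defG nNG; have nGN := normal_norm nNG.
have a1G : a1 \in G by rewrite defG mem_gen // !inE eqxx.
have a2G : a2 \in G by rewrite defG mem_gen // !inE eqxx orbT.
rewrite inE; case Gx: (x \in G) => //=.
have nx := subsetP nGN x Gx.
apply/idP/idP.
  move/morphpreP => [_ /centerP [_ cZ]].
  rewrite !comm_cosetP ?(subsetP nGN) //.
  by apply/andP; split; apply/commgP; apply: cZ; apply: mem_quotient.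
move=> /andP [h1 h2].
have hG : {in G, forall g, [~ x, g] \in N}.
  move=> g; rewrite defG; move: g; apply: comm_gen => //.
    by apply/subsetP => a /set2P [] ->; apply: (subsetP nGN).
  by move=> a /set2P [] ->.
apply: mem_morphpre => //; apply/centerP; split; first exact: mem_quotient.
move=> y /morphimP [g ng Gg ->]; apply/commgP.
by rewrite -comm_cosetP // hG.
Qed.

Lemma card_preZ (gT : finGroupType) (G N : {group gT}) :
  N <| G -> #|G :&: coset N @*^-1 'Z(G / N)| = (#|'Z(G / N)| * #|N|)%N.
Proof.
move=> nNG; have nGN := normal_norm nNG; have sNG := normal_sub nNG.
pose K := (G :&: coset N @*^-1 'Z(G / N))%G.
rewrite -[LHS]/#|K|.
have sNK : N \subset K.
  apply/subsetP => n Nn; rewrite inE (subsetP sNG) //=.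
  apply: mem_morphpre; first by rewrite (subsetP (normG N)).
  by rewrite /= coset_id // group1.
have sKN : K \subset 'N(N) by rewrite (subset_trans (subsetIl _ _)).
have qK : K / N = 'Z(G / N).
  rewrite quotientGI // cosetpreK.
  by apply/setIidPr; apply: center_sub.
by rewrite -qK card_quotient // -(Lagrange sNK) mulnC.
Qed.
Lemma expFpD (gT : finGroupType) p (g : gT) (a b : 'F_p) : prime p -> g ^+ p = 1 ->
  g ^+ ((a + b)%R : 'F_p) = g ^+ a * g ^+ b.
Proof.
move=> pp gp; have gq : g ^+ (Zp_trunc (pdiv p)).+2 = 1 by rewrite (Fp_cast pp).
by rewrite /= expg_mod // expgD.
Qed.

Lemma expFpM (gT : finGroupType) p (g : gT) (a b : 'F_p) : prime p -> g ^+ p = 1 ->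
  g ^+ ((a * b)%R : 'F_p) = g ^+ a ^+ b.
Proof.
move=> pp gp; have gq : g ^+ (Zp_trunc (pdiv p)).+2 = 1 by rewrite (Fp_cast pp).
by rewrite /= expg_mod // expgM.
Qed.

Lemma expFpn (gT : finGroupType) p (g : gT) (k : nat) : prime p -> g ^+ p = 1 ->
  g ^+ ((k%:R)%R : 'F_p) = g ^+ k.
Proof. by move=> pp gp; rewrite val_Fp_nat // expg_mod. Qed.

Lemma expFp0 (gT : finGroupType) p (g : gT) : g ^+ ((0%R : 'F_p) : nat) = 1.
Proof. by []. Qed.

Lemma expFp1 (gT : finGroupType) p (g : gT) : prime p -> g ^+ p = 1 -> g ^+ ((1%R : 'F_p) : nat) = g.
Proof. by move=> pp gp; by rewrite (@expFpn _ p g 1 pp gp) expg1. Qed.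

Definition E2 (gT : finGroupType) p (x y : gT) (a b : 'F_p) := x ^+ (a : nat) * y ^+ (b : nat).

Lemma E2M (gT : finGroupType) p (x y : gT) (a b c d : 'F_p) :
  prime p -> x ^+ p = 1 -> y ^+ p = 1 -> commute x y ->
  E2 x y a b * E2 x y c d = E2 x y (a + c)%R (b + d)%R.
Proof.
move=> pp xp yp cxy; rewrite /E2 !expFpD //.
rewrite !mulgA; congr (_ * _); rewrite -!mulgA; congr (_ * _).
exact: commuteX2.
Qed.

Lemma E2X (gT : finGroupType) p (x y : gT) (a b c : 'F_p) :
  prime p -> x ^+ p = 1 -> y ^+ p = 1 -> commute x y ->
  E2 x y a b ^+ (c : nat) = E2 x y (a * c)%R (b * c)%R.
Proof.
move=> pp xp yp cxy; rewrite /E2 !expFpM // expgMn //.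
exact: commuteX2.
Qed.

Lemma E2_00 (gT : finGroupType) p (x y : gT) : E2 x y (0%R : 'F_p) 0%R = 1.
Proof. by rewrite /E2 /= mulg1. Qed.

Lemma E2_eq (gT : finGroupType) p (x y : gT) (a b c d : 'F_p) :
  prime p -> x ^+ p = 1 -> y ^+ p = 1 -> commute x y ->
  E2 x y a b = E2 x y c d -> E2 x y (a - c)%R (b - d)%R = 1.
Proof.
move=> pp xp yp cxy e.
by rewrite -!E2M // e !E2M // !subrr E2_00.
Qed.

Lemma card_join_le (gT : finGroupType) (A H K : {group gT}) :
  abelian A -> H \subset A -> K \subset A -> #|H <*> K| <= #|H| * #|K|.
Proof.
move=> cA sH sK; rewrite cent_joinEr; last exact: (sub_abelian_cent2 cA).
have := mul_cardG H K => ->; rewrite -{1}(muln1 #|H * K|).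
by rewrite leq_mul2l cardG_gt0 orbT.
Qed.

Lemma card_cycle_le (gT : finGroupType) p (x : gT) : prime p -> x ^+ p = 1 -> #|<[x]>| <= p.
Proof.
move=> pp xp; rewrite -orderE; apply: dvdn_leq; first exact: prime_gt0.
by rewrite order_dvdn xp.
Qed.

Lemma Fp_inv_exp (gT : finGroupType) p (x : gT) (a : 'F_p) : prime p -> x ^+ p = 1 ->
  a != 0%R -> (x ^+ (a : nat)) ^+ ((a^-1)%R : nat) = x.
Proof.
by move=> pp xp a0; rewrite -expFpM // mulfV.
Qed.

Lemma indep2 (gT : finGroupType) p (A M : {group gT}) (x y : gT) (a b : 'F_p) :
  prime p -> abelian A -> x \in A -> y \in A -> M \subset A ->
  x ^+ p = 1 -> y ^+ p = 1 -> x ^+ (a : nat) * y ^+ (b : nat) \in M ->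
  (a != 0%R) || (b != 0%R) ->
  #|(<[x]> <*> <[y]>) <*> M| <= p * #|M|.
Proof.
move=> pp cA xA yA sMA xp yp hM ab.
have sxA : <[x]> \subset A by rewrite cycle_subG.
have syA : <[y]> \subset A by rewrite cycle_subG.
have key : forall z : gT, z \in A -> z ^+ p = 1 ->
   (<[x]> <*> <[y]>) <*> M \subset <[z]> <*> M ->
   #|(<[x]> <*> <[y]>) <*> M| <= p * #|M|.
  move=> z zA zp s; apply: leq_trans (subset_leq_card s) _.
  apply: leq_trans (card_join_le cA _ sMA) _; first by rewrite cycle_subG.
  by rewrite leq_mul2r card_cycle_le ?orbT.
have sjoin : forall u v : gT, u \in <[v]> <*> M -> 
    (<[u]> <*> <[v]>) <*> M \subset <[v]> <*> M /\ (<[v]> <*> <[u]>) <*> M \subset <[v]> <*> M.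
  move=> u v uJ; have s1 : <[u]> \subset <[v]> <*> M by rewrite cycle_subG.
  have s2 : <[v]> \subset <[v]> <*> M by apply: joing_subl.
  have s3 : M \subset <[v]> <*> M by apply: joing_subr.
  by split; rewrite join_subG ?s3 ?andbT // join_subG ?s1 ?s2.
case a0: (a == 0%R).
  move/eqP: a0 => a0; rewrite a0 /= mul1g in hM.
  rewrite a0 eqxx /= in ab.
  have yM : y \in M by rewrite -(Fp_inv_exp pp yp ab) groupX.
  apply: (key x xA xp); have := sjoin y x; case.
    by rewrite (subsetP (joing_subr _ _)).
  by move=> _ ->.
have xJ : x \in <[y]> <*> M.
  rewrite -(Fp_inv_exp pp xp (negbT a0)) groupX //.
  have -> : x ^+ (a : nat) = (x ^+ (a : nat) * y ^+ (b : nat)) * (y ^+ (b : nat))^-1 by rewrite mulgK.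
  rewrite groupM //; first by apply: (subsetP (joing_subr _ _)).
  by rewrite groupV; apply: (subsetP (joing_subl _ _)); rewrite mem_cycle.
apply: (key y yA yp); have := sjoin x y xJ; case=> s1 _. 
done.
Qed.

Unset Implicit Arguments.

Theorem lemma4p2 (p : nat) (gT : finGroupType) (G : {group gT})
    (a1 a2 : gT) (m n : 'F_p) :
  prime p ->
  #|G| = (p ^ 7)%N ->
  nilpotent G -> nil_class G = 4%N ->
  p.-abelem 'L_2(G) -> #|'L_2(G)| = (p ^ 5)%N ->
  G :=: <<[set a1; a2]>> ->
  let beta := [~ a1, a2] in
  let beta1 := [~ beta, a1] in
  let beta2 := [~ beta, a2] in
  let eta11 := [~ beta1, a1] in
  let eta12 := [~ beta1, a2] in
  let eta22 := [~ beta2, a2] in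
  'L_4(G) :=: <<[set eta11; eta12]>> ->
  eta22 = (eta11 ^+ (m : nat) * eta12 ^+ (n : nat))%g ->
  (m != 0%R) || (n != 0%R) ->
  (exists H : {group gT},
      [/\ H \subset 'Z(G), #|H| = p & #|'Z(G / H)| = (p ^ 2)%N])
  <->
  (exists lam mu : 'F_p,
      lam != 0%R /\ (m * lam ^+ 2 + n * lam * mu - mu ^+ 2 = 0)%R).
Proof.
move=> pp cardG nilG clG abel2 card2 defG beta beta1 beta2 eta11 eta12 eta22 defL4 eq22 mn0.
have Eb : beta = [~ a1, a2] by [].
have Eb1 : beta1 = [~ beta, a1] by [].
have Eb2 : beta2 = [~ beta, a2] by [].
have Ee11 : eta11 = [~ beta1, a1] by [].
have Ee12 : eta12 = [~ beta1, a2] by [].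
have Ee22 : eta22 = [~ beta2, a2] by [].
clearbody eta22 eta12 eta11 beta2 beta1 beta.
have p_gt0 := prime_gt0 pp; have p_gt1 := prime_gt1 pp.
have a1G : a1 \in G by rewrite defG mem_gen // !inE eqxx.
have a2G : a2 \in G by rewrite defG mem_gen // !inE eqxx orbT.
have L5 : 'L_5(G) = 1 by apply/(lcn_nil_classP 4 nilG); rewrite clG.
have sL2G : 'L_2(G) \subset G by exact: (@lcn_sub_leq _ 2 1 G isT).
have sL32 : 'L_3(G) \subset 'L_2(G) by exact: (@lcn_sub_leq _ 3 2 G isT).
have sL43 : 'L_4(G) \subset 'L_3(G) by exact: (@lcn_sub_leq _ 4 3 G isT).
have sL3G := subset_trans sL32 sL2G.
have sL4G := subset_trans sL43 sL3G.
have sL42 := subset_trans sL43 sL32.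
have nL2 := lcn_normal 2 G; have nL3 := lcn_normal 3 G; have nL4 := lcn_normal 4 G.
case/(abelemP (G := 'L_2(G)) pp): abel2 => cL2 expL2.
have cL2P : {in 'L_2(G) &, forall x y, commute x y} by move=> x y xL yL; apply: (centsP cL2).
have commL : forall k x g, x \in 'L_k.+1(G) -> g \in G -> [~ x, g] \in 'L_k.+2(G).
  by move=> k x g xL gG; rewrite lcnSn mem_commg.
have bL2 : beta \in 'L_2(G) by rewrite Eb lcnSn lcn1 mem_commg.
have b1L3 : beta1 \in 'L_3(G) by rewrite Eb1; apply: commL.
have b2L3 : beta2 \in 'L_3(G) by rewrite Eb2; apply: commL.
have e11L4 : eta11 \in 'L_4(G) by rewrite Ee11; apply: commL.
have e12L4 : eta12 \in 'L_4(G) by rewrite Ee12; apply: commL.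
have e22L4 : eta22 \in 'L_4(G) by rewrite Ee22; apply: commL.
have e21L4 : [~ beta2, a1] \in 'L_4(G) by apply: commL.
have cL4 : forall z g, z \in 'L_4(G) -> g \in G -> commute z g.
  move=> z g zL gG; apply/commgP; have := commL 3 z g zL gG.
  by rewrite L5 => /set1P ->.
have xp : forall x, x \in 'L_2(G) -> x ^+ p = 1 by [].
have cj : forall x y : gT, commute x y -> x ^ y = x.
  by move=> x y /commgP/eqP c; rewrite conjg_mulR c mulg1.
have e21 : [~ beta2, a1] = eta12.
  have h1 : [~ beta, a1 * a2] = beta2 * beta1 * eta12.
    by rewrite commgMJ conjg_mulR mulgA -Eb1 -Eb2 -Ee12.
  have h2 : [~ beta, a2 * a1] = beta1 * beta2 * [~ beta2, a1].
    by rewrite commgMJ conjg_mulR mulgA -Eb1 -Eb2.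
  have h3 : [~ beta, a1 * a2] = [~ beta, a2 * a1].
    rewrite (commgC a1 a2) -Eb [LHS]commgMJ commgg mul1g cj //.
    apply: cL2P => //; apply: (subsetP sL32); apply: commL => //.
    by rewrite groupM.
  have c12 : commute beta1 beta2 by apply: cL2P; apply: (subsetP sL32).
  move: h3; rewrite h1 h2 c12 -!mulgA => /mulgI /mulgI ->.
  done.
have swap : forall (N : {group gT}) x y, [~ y, x] \in N -> [~ x, y] \in N.
  by move=> N x y h; rewrite -invg_comm groupV.
have genC : forall (N : {group gT}) x, G \subset 'N(N) -> x \in G ->
    [~ x, a1] \in N -> [~ x, a2] \in N -> forall g, g \in G -> [~ x, g] \in N.
  move=> N x nN xG h1 h2 g; rewrite defG; apply: comm_gen.
  - exact: (subsetP nN).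
  - by apply/subsetP => a /set2P [] ->; apply: (subsetP nN).
  - by move=> a /set2P [] ->.
have cycL2 : forall x, x \in 'L_2(G) -> <[x]> \subset 'L_2(G).
  by move=> x xL; rewrite cycle_subG.
have cardcyc : forall x, x \in 'L_2(G) -> #|<[x]>| <= p.
  by move=> x xL; apply: card_cycle_le => //; apply: expL2.
have N2E : <[beta]> <*> 'L_3(G) = <[beta]> * 'L_3(G).
  by apply: cent_joinEr; apply: (sub_abelian_cent2 cL2 sL32 (cycL2 _ bL2)).
have sN2 : <[beta]> <*> 'L_3(G) \subset 'L_2(G) by rewrite join_subG cycL2.
have nN2 : G \subset 'N(<[beta]> <*> 'L_3(G)).
  rewrite -commg_subl; apply: subset_trans (commSg G sN2) _.
  by rewrite -lcnSn joing_subr.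
have bN2 : beta \in <[beta]> <*> 'L_3(G).
  by apply: (subsetP (joing_subl _ _)); apply: cycle_id.
have sL2N2 : 'L_2(G) \subset <[beta]> <*> 'L_3(G).
  rewrite lcnSn lcn1 /commutator gen_subG.
  apply/subsetP => _ /imset2P [g h gG hG ->].
  have hA : forall i, i \in [set a1; a2] -> forall g, g \in G -> [~ i, g] \in <[beta]> <*> 'L_3(G).
    move=> i /set2P [] -> {}g {}gG; apply: genC => //; 
      by rewrite ?commgg ?group1 -?Eb ?bN2 //; apply: swap; rewrite -Eb.
  apply: genC => //; apply: swap; apply: hA => //; rewrite !inE eqxx ?orbT //.
set N3 := (<[beta1]> <*> <[beta2]>) <*> 'L_4(G).
have sN3 : N3 \subset 'L_3(G).
  by rewrite !join_subG !cycle_subG b1L3 b2L3 sL43.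
have nN3 : G \subset 'N(N3).
  rewrite -commg_subl; apply: subset_trans (commSg G sN3) _.
  by rewrite -lcnSn joing_subr.
have b1N3 : beta1 \in N3.
  by apply: (subsetP (joing_subl _ _)); apply: (subsetP (joing_subl _ _)); apply: cycle_id.
have b2N3 : beta2 \in N3.
  by apply: (subsetP (joing_subl _ _)); apply: (subsetP (joing_subr _ _)); apply: cycle_id.
have sL3N3 : 'L_3(G) \subset N3.
  rewrite lcnSn; apply: subset_trans (commSg G sL2N2) _.
  rewrite /commutator gen_subG; apply/subsetP => _ /imset2P [y g yN2 gG ->].
  move: yN2; rewrite N2E => /mulsgP [b z /cycleP [k ->] zL3 ->].
  have zG : z \in G by apply: (subsetP sL3G).
  rewrite commMgJ groupM //; last first.
    by apply: (subsetP (joing_subr _ _)); apply: commL.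
  rewrite memJ_norm; last by apply: (subsetP nN3).
  apply: genC => //; first by rewrite groupX // (subsetP sL2G).
    by rewrite commXg -?Eb1 ?groupX //; apply: cL2P => //; rewrite Eb1 (subsetP sL32) //; apply: commL.
  by rewrite commXg -?Eb2 ?groupX //; apply: cL2P => //; rewrite Eb2 (subsetP sL32) //; apply: commL.
have cN2 : #|'L_2(G)| <= p * #|'L_3(G)|.
  apply: leq_trans (subset_leq_card sL2N2) _.
  apply: leq_trans (card_join_le cL2 (cycL2 _ bL2) sL32) _.
  by rewrite leq_mul2r cardcyc ?orbT.
have sJ12 : <[beta1]> <*> <[beta2]> \subset 'L_2(G).
  by rewrite join_subG !cycL2 // (subsetP sL32).
have cN3 : #|'L_3(G)| <= p * p * #|'L_4(G)|.
  apply: leq_trans (subset_leq_card sL3N3) _.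
  apply: leq_trans (card_join_le cL2 sJ12 sL42) _.
  rewrite leq_mul2r; apply/orP; right.
  apply: leq_trans (card_join_le cL2 (cycL2 _ _) (cycL2 _ _)) _; try exact: (subsetP sL32).
  by rewrite leq_mul ?cardcyc // (subsetP sL32).
have sL4J : 'L_4(G) \subset <[eta11]> <*> <[eta12]>.
  rewrite {1}defL4 gen_subG; apply/subsetP => e /set2P [] ->.
    by apply: (subsetP (joing_subl _ _)); apply: cycle_id.
  by apply: (subsetP (joing_subr _ _)); apply: cycle_id.
have cL4le : #|'L_4(G)| <= p * p.
  apply: leq_trans (subset_leq_card sL4J) _.
  apply: leq_trans (card_join_le cL2 (cycL2 _ _) (cycL2 _ _)) _; try exact: (subsetP sL42).
  by rewrite leq_mul ?cardcyc // (subsetP sL42).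
have c3 : #|'L_3(G)| = (p ^ 4)%N.
  apply/eqP; rewrite eqn_leq; apply/andP; split.
    apply: leq_trans cN3 _; rewrite (_ : (p ^ 4 = p * p * (p * p))%N); last by rewrite !expnS expn0 !mulnA muln1.
    by rewrite leq_mul2l cL4le orbT.
  by rewrite -(leq_pmul2l p_gt0) -expnS -card2.
have c4 : #|'L_4(G)| = (p ^ 2)%N.
  apply/eqP; rewrite eqn_leq; apply/andP; split.
    by rewrite expnS expn1.
  rewrite -(leq_pmul2l (_ : 0 < p * p)) ?muln_gt0 ?p_gt0 //.
  apply: leq_trans cN3; rewrite c3 !expnS expn0 !muln1 !mulnA //.
have e11p : eta11 ^+ p = 1 by apply: expL2; apply: (subsetP sL42).
have e12p : eta12 ^+ p = 1 by apply: expL2; apply: (subsetP sL42).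
have b1p : beta1 ^+ p = 1 by apply: expL2; apply: (subsetP sL32).
have b2p : beta2 ^+ p = 1 by apply: expL2; apply: (subsetP sL32).
have c1112 : commute eta11 eta12 by apply: cL2P; apply: (subsetP sL42).
have Einj : forall a b : 'F_p, E2 eta11 eta12 a b = 1 -> a = 0%R /\ b = 0%R.
  move=> a b h; case ab: ((a != 0%R) || (b != 0%R)); last first.
    by move/negbT: ab; rewrite negb_or !negbK => /andP [/eqP -> /eqP ->].
  have := indep2 (A := 'L_2(G)) (M := 1%G) pp cL2 (subsetP sL42 _ e11L4) (subsetP sL42 _ e12L4) (sub1G _) e11p e12p.
  move=> /(_ a b); rewrite /E2 in h; rewrite h group1 ab => /(_ isT isT); rewrite joingG1 cards1 muln1.
  move=> /(leq_trans (subset_leq_card sL4J)); rewrite c4.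
  by rewrite -{2}(expn1 p) leq_exp2l // ltnn.
have Binj : forall a b : 'F_p, beta1 ^+ (a : nat) * beta2 ^+ (b : nat) \in 'L_4(G) -> a = 0%R /\ b = 0%R.
  move=> a b h; case ab: ((a != 0%R) || (b != 0%R)); last first.
    by move/negbT: ab; rewrite negb_or !negbK => /andP [/eqP -> /eqP ->].
  have := indep2 (A := 'L_2(G)) (M := 'L_4(G)) (a := a) (b := b) pp cL2 (subsetP sL32 _ b1L3) (subsetP sL32 _ b2L3) sL42 b1p b2p h ab.
  move=> /(leq_trans (subset_leq_card sL3N3)); rewrite c3 c4 -expnS.
  by rewrite leq_exp2l // ltnn.
have N3E : N3 = (<[beta1]> * <[beta2]>) * 'L_4(G).
  rewrite /N3 cent_joinEr; last first.
    by apply: (sub_abelian_cent2 cL2); rewrite ?sL42 // join_subG !cycL2 // (subsetP sL32).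
  congr (_ * _); apply: cent_joinEr.
  by apply: (sub_abelian_cent2 cL2); rewrite ?cycL2 // (subsetP sL32).
have coordL3 : forall x, x \in 'L_3(G) -> exists (a b : 'F_p) w,
    w \in 'L_4(G) /\ x = beta1 ^+ (a : nat) * beta2 ^+ (b : nat) * w.
  move=> x /(subsetP sL3N3); rewrite N3E => /mulsgP [y w /mulsgP [u v /cycleP [i ->] /cycleP [j ->] ->] wL ->].
  exists (i%:R)%R, (j%:R)%R, w; split => //.
  by rewrite !expFpn.
have commL4 : forall w g, w \in 'L_4(G) -> g \in G -> [~ w, g] = 1.
  by move=> w g wL gG; apply/eqP/commgP; apply: cL4.
have commMc : forall x y g, x \in 'L_3(G) -> y \in G -> g \in G ->
    [~ x * y, g] = [~ x, g] * [~ y, g].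
  move=> x y g xL yG gG; rewrite commMgJ cj //.
  by apply: cL4 => //; apply: commL.
have commXc : forall x g k, x \in 'L_3(G) -> g \in G -> [~ x ^+ k, g] = [~ x, g] ^+ k.
  move=> x g k xL gG; apply: commXg; apply: commute_sym; apply: cL4.
    exact: commL.
  exact: (subsetP sL3G).
have phi : forall (a b : 'F_p) w g, w \in 'L_4(G) -> g \in G ->
    [~ beta1 ^+ (a : nat) * beta2 ^+ (b : nat) * w, g] = [~ beta1, g] ^+ (a : nat) * [~ beta2, g] ^+ (b : nat).
  move=> a b w g wL gG.
  rewrite commMc; [|by rewrite groupM ?groupX | exact: (subsetP sL4G) | done].
  rewrite (commL4 w g wL gG) mulg1 commMc; [|by rewrite groupX | by rewrite groupX // (subsetP sL3G) | done].
  by rewrite !commXc.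
have phi1 : forall (a b : 'F_p) w, w \in 'L_4(G) ->
    [~ beta1 ^+ (a : nat) * beta2 ^+ (b : nat) * w, a1] = E2 eta11 eta12 a b.
  by move=> a b w wL; rewrite phi // -Ee11 e21.
have phi2 : forall (a b : 'F_p) w, w \in 'L_4(G) ->
    [~ beta1 ^+ (a : nat) * beta2 ^+ (b : nat) * w, a2] = E2 eta11 eta12 (m * b)%R (a + n * b)%R.
  move=> a b w wL; rewrite phi // -Ee12 -Ee22 eq22.
  have -> : eta12 ^+ (a : nat) = E2 eta11 eta12 0%R a by rewrite /E2 /= mul1g.
  rewrite -/(E2 eta11 eta12 m n) E2X // E2M // add0r; congr E2.
have nGL3 := normal_norm nL3.
have cardQ : #|G / 'L_3(G)| = (p ^ 3)%N.
  rewrite card_quotient // -(divgS sL3G) cardG c3.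
  by rewrite -expnB.
have cardZ : #|'Z(G / 'L_3(G))| <= p.
  have := cardSg (center_sub (G / 'L_3(G))); rewrite cardQ.
  case/(dvdn_pfactor _ _ pp) => k k3 ck.
  case: (leqP k 1) => [k1 | k1]; first by rewrite ck -{2}(expn1 p) leq_exp2l.
  exfalso.
  set Q := G / 'L_3(G).
  have nZ := normal_norm (center_normal Q).
  have cQZ : cyclic (Q / 'Z(Q)).
    have := Lagrange (center_sub Q); rewrite -card_quotient // cardQ ck => e.
    have : (k == 2) || (k == 3) by move: k3 k1; case: (k) => [|[|[|[|]]]].
    case/orP=> /eqP ek; rewrite ek in e.
      apply: prime_cyclic; move: e; rewrite (expnSr p 2).
      by move/eqP; rewrite eqn_pmul2l ?muln_gt0 ?p_gt0 // => /eqP ->.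
    have : #|Q / 'Z(Q)| = 1%N.
      by move/eqP: e; rewrite -{2}(muln1 (p ^ 3)%N) eqn_pmul2l ?expn_gt0 ?p_gt0 // => /eqP.
    move/eqP; rewrite -trivg_card1 => /eqP ->; exact: cyclic1.
  have := cyclic_center_factor_abelian cQZ => /(der1_min nGL3).
  rewrite -lcn2 => /subset_leq_card; rewrite card2 c3 leq_exp2l //.
have CL2 : forall x, x \in G -> [~ x, a1] \in 'L_3(G) -> [~ x, a2] \in 'L_3(G) -> x \in 'L_2(G).
  move=> x xG h1 h2.
  set C := (G :&: coset 'L_3(G) @*^-1 'Z(G / 'L_3(G)))%G.
  have sL2C : 'L_2(G) \subset C.
    apply/subsetP => y yL; change (y \in G :&: coset 'L_3(G) @*^-1 'Z(G / 'L_3(G))).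
    by rewrite (preZ _ defG nL3) (subsetP sL2G) //= !commL.
  have eC : 'L_2(G) :=: C.
    apply/eqP; rewrite eqEcard sL2C /=.
    rewrite (card_preZ nL3) card2 c3 expnS leq_mul2r cardZ orbT //.
  rewrite eC; change (x \in G :&: coset 'L_3(G) @*^-1 'Z(G / 'L_3(G))).
  by rewrite (preZ _ defG nL3) xG h1 h2.
have D3 : forall x, x \in G -> [~ x, a1] \in 'L_4(G) -> [~ x, a2] \in 'L_4(G) -> x \in 'L_3(G).
  move=> x xG h1 h2.
  have := CL2 x xG (subsetP sL43 _ h1) (subsetP sL43 _ h2).
  move/(subsetP sL2N2); rewrite N2E => /mulsgP [b z /cycleP [k ->] zL3 ex].
  have zG : z \in G by apply: (subsetP sL3G).
  have bkG : beta ^+ k \in G by rewrite groupX // (subsetP sL2G).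
  have : [~ beta ^+ k, a1] \in 'L_4(G).
    rewrite -(memJ_norm _ (subsetP (normal_norm nL4) z zG)).
    have : [~ x, a1] * [~ z, a1]^-1 \in 'L_4(G) by rewrite groupM ?groupV // commL.
    by rewrite ex commMgJ mulgK.
  rewrite commXg -?Eb1; last by apply: cL2P => //; rewrite Eb1 (subsetP sL32) //; apply: commL.
  rewrite -(expFpn _ pp b1p) => hk.
  have := Binj (k%:R)%R 0%R; rewrite /= mulg1 => /(_ hk) [hk0 _].
  by rewrite ex -(expFpn _ pp (expL2 _ bL2)) hk0 /= mul1g.
have L4Z : 'L_4(G) \subset 'Z(G).
  apply/subsetP => z zL; apply/centerP; split; first exact: (subsetP sL4G).
  by move=> y yG; apply: cL4.
have ZL4 : 'Z(G) \subset 'L_4(G).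
  apply/subsetP => x /centerP [xG cx].
  have c1 : forall g, g \in G -> [~ x, g] = 1 by move=> g gG; apply/eqP/commgP; apply: cx.
  have := D3 x xG; rewrite !c1 // !group1 => /(_ isT isT) /coordL3 [a [b [w [wL ex]]]].
  move: (c1 a1 a1G); rewrite ex phi1 // => /Einj [a0 b0].
  by rewrite a0 b0 /= !mul1g.
have ordp : forall h, h \in 'L_4(G) -> h != 1 -> #[h] = p.
  move=> h hL h1; apply/(prime_nt_dvdP pp); first by rewrite order_eq1.
  by rewrite order_dvdn expL2 // (subsetP sL42).
have E2L4 : forall a b : 'F_p, E2 eta11 eta12 a b \in 'L_4(G).
  by move=> a b; rewrite /E2 groupM ?groupX.
have E2p : forall a b : 'F_p, E2 eta11 eta12 a b ^+ p = 1.
  by move=> a b; apply: expL2; apply: (subsetP sL42).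
split.
  case=> H [HZ cH cZ].
  have HL4 := subset_trans HZ ZL4.
  have nH := sub_center_normal HZ.
  have cK := card_preZ nH; rewrite cZ cH -expnSr in cK.
  have : ~~ (G :&: coset H @*^-1 'Z(G / H) \subset 'L_4(G)).
    apply/negP => /subset_leq_card; rewrite cK c4 leq_exp2l //.
  case/subsetPn => x xK xL4.
  move: xK; rewrite (preZ _ defG nH) => /and3P [xG h1 h2].
  have := D3 x xG (subsetP HL4 _ h1) (subsetP HL4 _ h2).
  case/coordL3 => a [b [w [wL ex]]].
  rewrite ex phi1 // in h1; rewrite ex phi2 // in h2.
  have ab : (a != 0%R) || (b != 0%R).
    case ab: ((a != 0%R) || (b != 0%R)) => //; move/negbT: ab; rewrite negb_or !negbK => /andP [/eqP a0 /eqP b0].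
    by move: xL4; rewrite ex a0 b0 /= !mul1g wL.
  have hn1 : E2 eta11 eta12 a b != 1.
    by apply/eqP => /Einj [a0 b0]; move: ab; rewrite a0 b0 eqxx.
  have eH : H :=: <[E2 eta11 eta12 a b]>.
    apply/eqP; rewrite eq_sym eqEcard cycle_subG h1 /= cH -orderE ordp //.
  move: h2; rewrite eH => /cycleP [t ht].
  rewrite -(expFpn _ pp (E2p _ _)) E2X // in ht.
  have := E2_eq pp e11p e12p c1112 ht => /Einj [e1 e2].
  have b0 : b != 0%R.
    apply/eqP => b0; move: e1 e2 ab; rewrite b0 !mulr0 !mul0r addr0 subr0.
    by move=> _ ->; rewrite eqxx.
  exists b, (- a)%R; split => //.
  have -> : (m * b ^+ 2 + n * b * - a - (- a) ^+ 2 = b * (m * b - a * (t%:R)) - a * (a + n * b - b * (t%:R)))%R by ring.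
  by rewrite e1 e2 !mulr0 subr0.
case=> L [M [L0 eqLM]].
set a := (- M)%R; set b := L.
set x := beta1 ^+ (a : nat) * beta2 ^+ (b : nat) * 1.
set h := E2 eta11 eta12 a b.
have hn1 : h != 1 by apply/eqP => /Einj [_ b0]; move: L0; rewrite -/b b0 eqxx.
have xG : x \in G by rewrite /x !groupM ?groupX ?group1 // (subsetP sL3G).
exists <[h]>%G; split.
- by rewrite cycle_subG (subsetP L4Z) ?E2L4.
- by rewrite -orderE ordp ?E2L4.
have nH : <[h]> <| G by apply: sub_center_normal; rewrite cycle_subG (subsetP L4Z) ?E2L4.
have HL4 : <[h]> \subset 'L_4(G) by rewrite cycle_subG E2L4.
set K := (G :&: coset <[h]> @*^-1 'Z(G / <[h]>))%G.
have memK : forall y, (y \in K) = [&& y \in G, [~ y, a1] \in <[h]> & [~ y, a2] \in <[h]>].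
  by move=> y; apply: (preZ _ defG nH).
have sKL3 : K \subset 'L_3(G).
  apply/subsetP => y; rewrite memK => /and3P [yG h1 h2].
  by apply: D3 => //; apply: (subsetP HL4).
have sL4K : 'L_4(G) \subset K.
  apply/subsetP => z zL; rewrite memK (subsetP sL4G) //= !commL4 ?group1 //.
have xK : x \in K.
  rewrite memK xG /x phi1 ?phi2 ?group1 // cycle_id /=.
  apply/cycleP; exists ((a + n * b) / b)%R.
  rewrite E2X //; congr E2.
    apply: (mulIf L0); rewrite -[RHS]mulrA divfK //.
    apply/eqP; rewrite -subr_eq0; apply/eqP; rewrite -eqLM /a /b; ring.
  by rewrite [RHS]mulrC divfK.
have xL4 : x \notin 'L_4(G).
  by apply/negP; rewrite /x mulg1 => /Binj [_ b0]; move: L0; rewrite -/b b0 eqxx.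
have nL3K : ~~ ('L_3(G) \subset K).
  apply/negP => sL3K.
  have : 'L_4(G) \subset <[h]>.
    rewrite {1}defL4 gen_subG; apply/subsetP => e /set2P [] ->.
      have := subsetP sL3K _ b1L3; rewrite memK => /and3P [_ h1 _].
      by rewrite Ee11.
    have := subsetP sL3K _ b2L3; rewrite memK => /and3P [_ h1 _].
    by rewrite -e21.
  move/subset_leq_card; rewrite c4 -orderE (ordp h (E2L4 _ _) hn1) -{2}(expn1 p) leq_exp2l //.
have cK : #|K| = (p ^ 3)%N.
  have := cardSg sKL3; rewrite c3 => /(dvdn_pfactor _ _ pp) [k _ ck].
  have lo : #|'L_4(G)| < #|K|.
    by apply: proper_card; rewrite properE sL4K; apply/subsetPn; exists x.
  have hi : #|K| < #|'L_3(G)|.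
    by apply: proper_card; rewrite properE sKL3.
  rewrite c4 ck ltn_exp2l // in lo; rewrite c3 ck ltn_exp2l // in hi.
  by rewrite ck; congr (_ ^ _)%N; apply/eqP; rewrite eqn_leq -ltnS hi lo.
move: (card_preZ nH); rewrite -/K cK -orderE (ordp h (E2L4 _ _) hn1) => e.
by apply/eqP; rewrite -(eqn_pmul2r p_gt0) -e -expnSr.
Qed.
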